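(* Let $t\geq 5$ and let $H$ be the simple graph with vertex set $\{x_1,x_2,x_3,y_1,\dots,y_{t-4}\}$ whose edges are $x_1x_2,x_2x_3,x_1x_3$ and all edges $x_iy_j$ for $i\in\{1,2,3\}$, $1\leq j\leq t-4$. Then $L(H)$ has a $K_t$-immersion.
   Context: $L(H)$ is the simple graph with vertex set $E(H)$ in which two distinct edges of $H$ are adjacent iff they share an endpoint. A graph $G$ has a $K_t$-immersion if there is an injective map $\phi$ from the vertex set of $K_t$ to $V(G)$ and, for each pair $u\neq v$ of vertices of $K_t$, a path in $G$ joining $\phi(u)$ and $\phi(v)$, such that these paths are pairwise edge-disjoint. *)

(* Defs.v *)
From mathcomp Require Import all_boot.
Set Implicit Arguments. Unset Strict Implicit. Unset Printing Implicit Defensive.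

Definition pedges (T : finType) (x : T) (s : seq T) : seq {set T} :=
  [seq [set ab.1; ab.2] | ab <- zip (x :: s) s].

Definition has_Kt_immersion (T : finType) (adj : rel T) (t : nat) : Prop :=
  exists (phi : 'I_t -> T) (P : 'I_t -> 'I_t -> seq T),
    injective phi /\
    (forall u v : 'I_t, u < v ->
       [/\ path adj (phi u) (P u v), last (phi u) (P u v) = phi v
         & uniq (phi u :: P u v)]) /\
    (forall u v u' v' : 'I_t, u < v -> u' < v' -> (u, v) != (u', v') ->
       forall e, e \in pedges (phi u) (P u v) ->
                 e \notin pedges (phi u') (P u' v')).

(* The graph H: vertices x_1,x_2,x_3 (inl 'I_3) and y_1..y_n (inr 'I_n);
   edges: x_i x_j (i<>j) and x_i y_j. *)
Definition Hvert (n : nat) := ('I_3 + 'I_n)%type.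

Definition Hadj (n : nat) : rel (Hvert n) :=
  fun a b => match a, b with
             | inl i, inl j => i != j
             | inl _, inr _ => true
             | inr _, inl _ => true
             | inr _, inr _ => false
             end.

Definition is_Hedge (n : nat) (e : {set Hvert n}) : bool :=
  [exists a, exists b, Hadj a b && (e == [set a; b])].

Definition LHvert (n : nat) := {e : {set Hvert n} | is_Hedge e}.

Definition LHadj (n : nat) : rel (LHvert n) :=
  fun e f => (e != f) && ~~ [disjoint val e & val f].

(* Main.v *)
Require Import Defs.
From mathcomp Require Import all_boot zify.

Section C.
Variable n : nat.
Hypothesis n0 : 0 < n.

Definition phic (u : nat) : nat * nat :=
  if u < n then (0, u) else if u == n then (3, 0) else if u == n.+1 then (3, 1)
  else if u == n.+2 then (3, 2) else (2, 0).

Definition Pc (u v : nat) : seq (nat * nat) :=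
  if v < n.+2 then [:: phic v]
  else if v == n.+2 then (if u < n then [:: (1, u); (3, 2)] else [:: (3, 2)])
  else if u == 0 then [:: (2, 0)] else if u < n then [:: (2, u); (2, 0)]
  else if u == n then [:: (1, 0); (2, 0)] else [:: (2, 0)].

Definition adjc (a b : nat * nat) : bool :=
  (a != b) &&
  [|| (a.1 < 3) && (b.1 < 3) && ((a.1 == b.1) || (a.2 == b.2)),
      (a.1 == 3) && (b.1 == 3),
      (a.1 < 3) && (b.1 == 3) && ((a.1 == 0) && (b.2 <= 1) || (a.1 == 1) && (b.2 != 1) || (a.1 == 2) && (b.2 != 0))
    | (b.1 < 3) && (a.1 == 3) && ((b.1 == 0) && (a.2 <= 1) || (b.1 == 1) && (a.2 != 1) || (b.1 == 2) && (a.2 != 0))].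

Definition validc (c : nat * nat) : bool := (c.1 < 3) && (c.2 < n) || (c.1 == 3) && (c.2 < 3).

Lemma code_path u v : u < v < n + 4 ->
  [/\ path adjc (phic u) (Pc u v), last (phic u) (Pc u v) = phic v,
      uniq (phic u :: Pc u v) & all validc (phic u :: Pc u v)].
Proof.
move=> /andP[uv vt]; rewrite /Pc /phic.
repeat case: ifP => ?; rewrite /= /adjc /validc /= ?inE ?xpair_eqE /= ?andbT; split; try lia; done.
Qed.

Lemma code_inj u v : u < n + 4 -> v < n + 4 -> phic u = phic v -> u = v.
Proof.
move=> ? ? E; move: (congr1 fst E) (congr1 snd E); rewrite /phic.
repeat case: ifP => ?; rewrite /=; lia.
Qed.

Lemma code_disj u v u' v' a1 a2 b1 b2 c1 c2 d1 d2 :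
  u < v < n + 4 -> u' < v' < n + 4 ->
  ((a1, a2), (b1, b2)) \in zip (phic u :: Pc u v) (Pc u v) ->
  ((c1, c2), (d1, d2)) \in zip (phic u' :: Pc u' v') (Pc u' v') ->
  (a1 = c1 /\ a2 = c2 /\ b1 = d1 /\ b2 = d2) \/ (a1 = d1 /\ a2 = d2 /\ b1 = c1 /\ b2 = c2) ->
  u = u' /\ v = v'.
Proof.
move=> /andP[? ?] /andP[? ?]; rewrite /Pc /phic.
repeat case: ifP => ?; rewrite /= !inE ?xpair_eqE; lia.
Qed.
Lemma phic_valid u : u < n + 4 -> validc (phic u).
Proof. move=> ?; rewrite /phic /validc; repeat case: ifP => ? /=; lia. Qed.
End C.



Section G.
Variable m : nat.
Local Notation n := m.+1.

Definition hv (c : nat * nat) : Hvert n * Hvert n :=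
  if c.1 < 3 then (inl (inord c.1), inr (inord c.2))
  else if c.2 == 0 then (inl (inord 0), inl (inord 1))
  else if c.2 == 1 then (inl (inord 0), inl (inord 2))
  else (inl (inord 1), inl (inord 2)).

Lemma inord_eq k a b : a <= k -> b <= k -> (inord a == inord b :> 'I_k.+1) = (a == b).
Proof. by move=> ha hb; rewrite -val_eqE /= !inordK. Qed.

Lemma hv_adj c : validc n c -> Hadj (hv c).1 (hv c).2.
Proof.
rewrite /validc /hv => hc; case: ifP => h1 //=; repeat case: ifP => ? /=; rewrite inord_eq; lia.
Qed.

Lemma hv_edge c : validc n c -> is_Hedge [set (hv c).1; (hv c).2].
Proof. by move=> hc; rewrite /is_Hedge; apply/existsP; exists (hv c).1; apply/existsP; exists (hv c).2; rewrite hv_adj // eqxx. Qed.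

Definition a12 : LHvert n := Sub _ (@hv_edge (3, 0) isT).

Definition lv (c : nat * nat) : LHvert n := insubd a12 [set (hv c).1; (hv c).2].

Lemma val_lv c : validc n c -> val (lv c) = [set (hv c).1; (hv c).2].
Proof. by move=> hc; rewrite /lv insubdK //; apply: hv_edge. Qed.

Lemma inl_eq (A B : eqType) (a b : A) : (inl a == inl b :> A + B) = (a == b). Proof. by []. Qed.
Lemma inr_eq (A B : eqType) (a b : B) : (inr a == inr b :> A + B) = (a == b). Proof. by []. Qed.
Lemma inlr_eq (A B : eqType) (a : A) (b : B) : (inl a == inr b :> A + B) = false. Proof. by []. Qed.
Lemma inrl_eq (A B : eqType) (a : A) (b : B) : (inr b == inl a :> A + B) = false. Proof. by []. Qed.
Definition sumE := (inl_eq, inr_eq, inlr_eq, inrl_eq).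

Definition hasx (c : nat * nat) (w : nat) : bool :=
  if c.1 < 3 then c.1 == w else w != 2 - c.2.

Lemma memx c w : validc n c -> w < 3 -> (inl (inord w) \in val (lv c)) = hasx c w.
Proof.
move=> hc hw; rewrite val_lv // /hv /hasx; move: hc; rewrite /validc => hc.
case: ifP => h1; rewrite !inE /=.
  by rewrite !sumE inord_eq 1?eq_sym //= orbF; lia.
repeat case: ifP => ? /=; rewrite !sumE !inord_eq; apply/idP/idP; lia.
Qed.

Lemma memy c j : validc n c -> j < n -> (inr (inord j) \in val (lv c)) = (c.1 < 3) && (c.2 == j).
Proof.
move=> hc hj; rewrite val_lv // /hv; case: ifP => h1; rewrite !inE /=.
  by rewrite !sumE inord_eq 1?eq_sym //; move: hc; rewrite /validc; lia.
by repeat case: ifP => ? /=; rewrite !sumE.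
Qed.

Lemma set2_inj (T : finType) (x y z w : T) :
  [set x; y] = [set z; w] -> (x = z /\ y = w) \/ (x = w /\ y = z).
Proof.
move=> E.
have hx : x \in [set z; w] by rewrite -E !inE eqxx.
have hy : y \in [set z; w] by rewrite -E !inE eqxx orbT.
have hz : z \in [set x; y] by rewrite E !inE eqxx.
have hw : w \in [set x; y] by rewrite E !inE eqxx orbT.
move: hx hy hz hw; rewrite !inE.
by move=> /orP[]/eqP? /orP[]/eqP? /orP[]/eqP? /orP[]/eqP?; subst; auto.
Qed.

Lemma lv_inj c d : validc n c -> validc n d -> lv c = lv d -> c = d.
Proof.
move=> hc hd E; have := congr1 val E; rewrite !val_lv //.
move/set2_inj; case: c d hc hd {E} => [c1 c2] [d1 d2]; rewrite /validc /hv /= => hc hd.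
repeat case: ifP => ? /=; case=> [[E1 E2]|[E1 E2]];
  repeat (match goal with H : inl _ = inl _ |- _ => case: H => /eqP; rewrite inord_eq; try lia; move=> /eqP H
          | H : inr _ = inr _ |- _ => case: H => /eqP; rewrite inord_eq; try lia; move=> /eqP H
          | H : inl _ = inr _ |- _ => by []
          | H : inr _ = inl _ |- _ => by [] end);
  apply/eqP; rewrite xpair_eqE; lia.
Qed.

Lemma lv_adj a b : adjc a b -> validc n a -> validc n b -> LHadj (lv a) (lv b).
Proof.
move=> hab ha hb; rewrite /LHadj; apply/andP; split.
  by apply/eqP => /(@lv_inj _ _ ha hb) E; move: hab; rewrite /adjc E eqxx.
apply/negP => D.
move: a b hab ha hb D => [a1 a2] [b1 b2]; rewrite /adjc /validc xpair_eqE /= => hab ha hb D.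
pose w := if a1 < 3 then a1 else if b1 < 3 then b1 else a2 + b2 - 1.
case: (boolP ((a1 < 3) && (b1 < 3) && (a1 != b1))) => hc.
  have hj : a2 < n by lia.
  have := disjointFr D (x := inr (inord a2)); rewrite !memy //=; lia.
have hw : w < 3 by rewrite /w; repeat case: ifP => ? /=; lia.
have := disjointFr D (x := inl (inord w)).
rewrite !memx // /hasx /w /=; repeat case: ifP => ? /=; lia.
Qed.

Lemma path_lv x s : path adjc x s -> all (validc n) (x :: s) -> path (@LHadj n) (lv x) (map lv s).
Proof.
elim: s x => [|y s IH] x //= /andP[hxy hp] /and3P[hx hy hs].
by rewrite lv_adj // IH //= hy.
Qed.

Lemma pedges_lv x s e : e \in pedges (lv x) (map lv s) ->
  exists a b, (a, b) \in zip (x :: s) s /\ e = [set lv a; lv b] /\ a \in x :: s /\ b \in x :: s.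
Proof.
elim: s x => [|y s IH] x //=; rewrite /pedges /= inE => /orP[/eqP ->|].
  by exists x, y; rewrite !inE !eqxx /= orbT.
move=> /IH [a [b [h1 [h2 [h3 h4]]]]]; exists a, b; split.
  by rewrite inE h1 orbT.
by move: h3 h4; rewrite !inE => -> ->; rewrite !orbT.
Qed.
End G.


Lemma main_m m : has_Kt_immersion (@LHadj m.+1) (m.+1 + 4).
Proof.
have n0 : 0 < m.+1 by [].
exists (fun u => lv m (phic m.+1 u)), (fun u v => map (lv m) (Pc m.+1 u v)).
split; [|split].
- move=> u v /(lv_inj m _ _ (phic_valid m.+1 n0 u (ltn_ord u)) (phic_valid m.+1 n0 v (ltn_ord v))).
  by move/(code_inj m.+1 n0 u v (ltn_ord u) (ltn_ord v)) => /val_inj.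
- move=> u v uv.
  have [hp hl hu hv] := code_path m.+1 n0 u v (introT andP (conj uv (ltn_ord v))).
  split.
  + exact: path_lv.
  + by rewrite last_map hl.
  + rewrite -(map_cons (lv m)) map_inj_in_uniq // => x y hx hy.
    apply: (lv_inj m); by move/allP: hv; apply.
- move=> u v u' v' uv uv' neq e.
  move/pedges_lv => [a [b [hab [-> [ha hb]]]]].
  apply/negP => /pedges_lv [c [d [hcd [E [hc hd]]]]].
  have [_ _ _ hv] := code_path m.+1 n0 u v (introT andP (conj uv (ltn_ord v))).
  have [_ _ _ hv'] := code_path m.+1 n0 u' v' (introT andP (conj uv' (ltn_ord v'))).
  have va := allP hv _ ha; have vb := allP hv _ hb.
  have vc := allP hv' _ hc; have vd := allP hv' _ hd.
  move: a b c d hab hcd E ha hb hc hd va vb vc vd => [a1 a2] [b1 b2] [c1 c2] [d1 d2] hab hcd E ha hb hc hd va vb vc vd.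
  have H := code_disj m.+1 n0 u v u' v' _ _ _ _ _ _ _ _ (introT andP (conj uv (ltn_ord v))) (introT andP (conj uv' (ltn_ord v'))) hab hcd.
  have [Eu Ev] : (u : nat) = u' /\ (v : nat) = v'.
    apply: H; case/set2_inj: E => [[E1 E2]|[E1 E2]]; [left|right].
      by move: E1 E2 => /(lv_inj m _ _ va vc) [-> ->] /(lv_inj m _ _ vb vd) [-> ->].
    by move: E1 E2 => /(lv_inj m _ _ va vd) [-> ->] /(lv_inj m _ _ vb vc) [-> ->].
  by move: neq; rewrite (val_inj Eu) (val_inj Ev) eqxx.
Qed.

Theorem mainTheorem11 (t : nat) (ht : 5 <= t) :
  has_Kt_immersion (@LHadj (t - 4)) t.
Proof.
have [k ->] : exists k, t = k.+1 + 4 by exists (t - 5); lia.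
rewrite addnK; exact: main_m.
Qed.
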